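(* Let $R$ be a commutative ring, $m\ge 1$, $A=(a_{ij})\in R^{m\times m}$, $b\in R^m$ and $x=(x_1,\dots,x_m)$. Let $L\in R^{(m+1)\times(m+1)}$ be the matrix with $L_{ij}=a_{ij}$ for $i,j\le m$, $L_{i,m+1}=b_i$ for $i\le m$, $L_{m+1,j}=-\sum_{k=1}^m a_{kj}$ for $j\le m$, and $L_{m+1,m+1}=-\sum_{k=1}^m b_k$. Let $\mathcal{G}$ be a labeled multidigraph (without self-loops, node set $\{1,\dots,m+1\}$) with Laplacian $L$. Then $\det(A)=(-1)^m\Upsilon_\mathcal{G}(m+1)$. Further, if $\det(A)\neq 0$, then the solution to the linear system $Ax+b=0$ is \[x_i=\frac{\Upsilon_\mathcal{G}(i)}{\Upsilon_\mathcal{G}(m+1)}\in\widehat{R},\qquad i=1,\dots,m,\] where $\widehat{R}\supseteq R$ is an extension ring of $R$ in which these quotients are defined.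
   Context: A multidigraph $\mathcal{G}=(\mathcal{N},\mathcal{E})$ consists of finite sets of nodes $\mathcal{N}$ and edges $\mathcal{E}$ with source and target maps $s,t\colon\mathcal{E}\to\mathcal{N}$ (parallel edges allowed); here there are no self-loops and $\mathcal{N}=\{1,\dots,m+1\}$. A labeling is a map $\pi\colon\mathcal{E}\to R$, extended to subsets by $\pi(\mathcal{E}')=\prod_{e\in\mathcal{E}'}\pi(e)$. A tree is a subgraph whose underlying undirected graph is connected and acyclic; it is rooted at a node $N$ if $N$ is its only node without outgoing edges. A spanning tree has node set $\mathcal{N}$ and is identified with its edge set. For $j\in\mathcal{N}$, $\Theta_\mathcal{G}(j)$ is the set of spanning trees of $\mathcal{G}$ rooted at $j$ and $\Upsilon_\mathcal{G}(j)=\sum_{\tau\in\Theta_\mathcal{G}(j)}\pi(\tau)$ (zero if the set is empty). The Laplacian of $\mathcal{G}$ is the $(m+1)\times(m+1)$ matrix with $L_{ij}=\sum_{e:\,s(e)=j,\,t(e)=i}\pi(e)$ for $i\ne j$ and $L_{ii}=-\sum_{k\ne i}L_{ki}$. *)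

(* Defs.v *)
From HB Require Import structures.
From mathcomp Require Import all_boot all_order all_algebra.
From Stdlib Require Import ClassicalEpsilon.
Set Implicit Arguments.
Unset Strict Implicit.
Unset Printing Implicit Defensive.
Import GRing.Theory.
Local Open Scope ring_scope.

Definition classicb (P : Prop) : bool :=
  if excluded_middle_informative P then true else false.

(* A multidigraph with node set 'I_n, finite edge type E and
   source / target maps s, t (parallel edges allowed). *)
Section Graph.
Variables (n : nat) (E : finType) (s t : E -> 'I_n).

Definition joins (e : E) (u v : 'I_n) : bool :=
  ((s e == u) && (t e == v)) || ((s e == v) && (t e == u)).

Definition uadj (T : {set E}) : rel 'I_n :=
  fun u v => [exists e in T, joins e u v].

Definition uconnected (T : {set E}) : bool :=
  [forall u, forall v, connect (uadj T) u v].

(* an (undirected) cycle in T: distinct edges e_1..e_k (k >= 1) and distinct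
   nodes v_0..v_{k-1} such that e_i joins v_{i-1} and v_i (indices mod k). *)
Definition has_cycle (T : {set E}) : Prop :=
  exists (es : seq E) (vs : seq 'I_n),
    [/\ (0 < size es)%N, size vs = size es, uniq es & uniq vs] /\
    {subset es <= T} /\
        all (fun p => joins p.1 p.2.1 p.2.2) (zip es (zip vs (rot 1 vs))).

Definition uacyclic (T : {set E}) : Prop := ~ has_cycle T.

Definition rooted_at (T : {set E}) (j : 'I_n) : bool :=
  [forall u, (u == j) == [forall e in T, s e != u]].

Definition spanning_tree_rooted (T : {set E}) (j : 'I_n) : Prop :=
  [/\ uconnected T, uacyclic T & rooted_at T j].

Variables (R : comPzRingType) (pi : E -> R).

Definition Upsilon (j : 'I_n) : R :=
  \sum_(T : {set E} | classicb (spanning_tree_rooted T j)) \prod_(e in T) pi e.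

Definition lap_offdiag (i j : 'I_n) : R :=
  \sum_(e : E | (s e == j) && (t e == i)) pi e.

Definition laplacian : 'M[R]_n :=
  \matrix_(i, j) (if i == j then - \sum_(k | k != i) lap_offdiag k i
                  else lap_offdiag i j).

End Graph.

(* The (m+1)x(m+1) matrix built from A and b; node m+1 is ord_max,
   node i <= m is lift ord_max (i-1). *)
Definition Lmat (R : comPzRingType) (m : nat) (A : 'M[R]_m) (b : 'cV[R]_m)
  : 'M[R]_m.+1 :=
  \matrix_(i, j)
    match unlift ord_max i, unlift ord_max j with
    | Some i', Some j' => A i' j'
    | Some i', None => b i' 0
    | None, Some j' => - \sum_(k < m) A k j'
    | None, None => - \sum_(k < m) b k 0
    end.

(* Main.v *)
Set Warnings "-all".
Require Import Defs.
From HB Require Import structures.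
From mathcomp Require Import all_boot all_order all_algebra.
From mathcomp Require Import fingroup perm.
From Stdlib Require Import ClassicalEpsilon Classical.
Set Implicit Arguments.
Unset Strict Implicit.
Unset Printing Implicit Defensive.
Import GRing.Theory.

Lemma classicbP (P : Prop) : classicb P = true <-> P.
Proof. by rewrite /classicb; case: excluded_middle_informative. Qed.

Section Comb.
Variables (m : nat) (E : finType) (s t : E -> 'I_m.+1).
Hypothesis noloop : forall e, s e != t e.
Variable r : 'I_m.+1.

Definition Gf (phi : {ffun 'I_m -> E}) (x : 'I_m.+1) : 'I_m.+1 :=
  if unlift r x is Some j then t (phi j) else r.
Definition reach phi x := exists k, iter k (Gf phi) x = r.
Definition good phi := forall j, reach phi (lift r j).
Definition srcok (phi : {ffun 'I_m -> E}) := forall j, s (phi j) = lift r j.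
Definition imf (phi : {ffun 'I_m -> E}) : {set E} := [set phi j | j : 'I_m].

Lemma Gf_lift phi j : Gf phi (lift r j) = t (phi j).
Proof. by rewrite /Gf liftK. Qed.

Lemma Gf_r phi : Gf phi r = r.
Proof. by rewrite /Gf unlift_none. Qed.

Lemma reachG phi x : reach phi x <-> reach phi (Gf phi x).
Proof.
split=> [[[|k] Hk] | [k Hk]].
- by exists 0; move: Hk => /= ->; rewrite Gf_r.
- by exists k; rewrite -iterSr.
- by exists k.+1; rewrite iterSr.
Qed.

Lemma srcok_inj phi : srcok phi -> injective phi.
Proof. by move=> ok i j /(congr1 s); rewrite !ok => /lift_inj. Qed.

Lemma joins_sym e u v : joins s t e u v = joins s t e v u.
Proof. by rewrite /joins orbC. Qed.

Lemma uadj_sym T : symmetric (uadj s t T).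
Proof.
move=> u v; apply/existsP/existsP => -[e He]; exists e; by rewrite joins_sym.
Qed.

Lemma conn_good phi : srcok phi -> good phi -> uconnected s t (imf phi).
Proof.
move=> ok gd.
have toroot : forall x, connect (uadj s t (imf phi)) x r.
  move=> x.
  have [j ->|->] := unliftP r x; last exact: connect0.
  have [k Hk] := gd j; rewrite -{2}Hk.
  elim: k {Hk} => [|k IH] /=; first exact: connect0.
  apply: connect_trans IH _.
  set y := iter k _ _.
  have [i ->|->] := unliftP r y; last by rewrite Gf_r connect0.
  apply: connect1; apply/existsP; exists (phi i).
  rewrite Gf_lift /joins ok !eqxx /= andbT.
  by apply/imsetP; exists i.
apply/forallP => u; apply/forallP => v.
apply: connect_trans (toroot u) _.
by rewrite (sym_connect_sym (@uadj_sym _)) toroot.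
Qed.

Lemma rooted_good phi : srcok phi -> rooted_at s (imf phi) r.
Proof.
move=> ok; apply/forallP => u.
have [j ->|->] := unliftP r u.
- rewrite [lift r j == r]eq_sym (negbTE (neq_lift r j)).
  case: forall_inP => [H|//]; have := H (phi j); rewrite ok eqxx; apply.
  by apply/imsetP; exists j.
- rewrite eqxx eq_sym eqb_id; apply/forall_inP => e /imsetP[j _ ->].
  by rewrite ok eq_sym neq_lift.
Qed.


Lemma joins_ends e a b : joins s t e a b -> (s e \in [:: a; b]) && (t e \in [:: a; b]).
Proof.
by case/orP => /andP[/eqP-> /eqP->]; rewrite !inE !eqxx ?orbT.
Qed.

Lemma cycle_ends (T : {set E}) es vs :
  size vs = size es ->
  all (fun p => joins s t p.1 p.2.1 p.2.2) (zip es (zip vs (rot 1 vs))) ->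
  forall e, e \in es -> (s e \in vs) && (t e \in vs).
Proof.
move=> szeq alljoin e ees.
set Z := zip vs (rot 1 vs).
have szZ : size Z = size es by rewrite /Z size_zip size_rot minnn.
have : e \in unzip1 (zip es Z) by rewrite unzip1_zip ?szZ.
case/mapP => p pin ->.
have /joins_ends/andP[H1 H2] := allP alljoin p pin.
have : p.2 \in unzip2 (zip es Z) by apply: map_f.
rewrite unzip2_zip ?szZ // => pZ.
have q1 : p.2.1 \in vs by rewrite -(unzip1_zip (s:=vs) (t:=rot 1 vs)) ?size_rot //; apply: map_f.
have q2 : p.2.2 \in vs.
  by rewrite -(mem_rot 1) -(unzip2_zip (s:=vs) (t:=rot 1 vs)) ?size_rot //; apply: map_f.
move: H1 H2; rewrite !inE => /orP[] /eqP-> /orP[] /eqP->; by rewrite ?q1 ?q2.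
Qed.

Lemma acyclic_good phi : srcok phi -> good phi -> uacyclic s t (imf phi).
Proof.
move=> ok gd [es [vs [[sz0 szeq ues uvs] [sub alljoin]]]].
have ends := cycle_ends (imf phi) szeq alljoin.
have injs : {in imf phi &, injective s}.
  move=> e1 e2 /imsetP[j1 _ ->] /imsetP[j2 _ ->].
  by rewrite !ok => /lift_inj ->.
have ums : uniq (map s es).
  rewrite map_inj_in_uniq // => e1 e2 H1 H2; apply: injs; exact: sub.
have subv : {subset map s es <= vs}.
  by move=> v /mapP[e ein ->]; case/andP: (ends e ein).
have [_ cover] := uniq_min_size ums subv (eq_leq (etrans szeq (esym (size_map s es)))).
have closed : forall v, v \in vs -> (v != r) && (Gf phi v \in vs).
  move=> v; rewrite -cover => /mapP[e ein ->].
  have /imsetP[j _ ej] := sub e ein.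
  rewrite ej ok Gf_lift eq_sym neq_lift /=.
  by rewrite -ej; case/andP: (ends e ein).
case: vs szeq uvs alljoin ends subv cover closed => [|v0 vs'] szeq; first by rewrite -szeq in sz0.
move=> _ _ _ _ _ closed.
have v0in : v0 \in v0 :: vs' by rewrite mem_head.
have /andP[v0r _] := closed _ v0in.
have [j v0j|] := unliftP r v0; last by move=> v0e; rewrite v0e eqxx in v0r.
have [k Hk] := gd j.
have : iter k (Gf phi) v0 \in v0 :: vs'.
  have hom : {homo Gf phi : x / x \in v0 :: vs'}.
    by move=> x xin; case/andP: (closed x xin).
  by elim: (k) => // k' IH; rewrite iterS; apply: hom.
by subst v0; rewrite Hk => H; have := closed _ H; rewrite eqxx.
Qed.


Fixpoint pe (g : 'I_m.+1 -> 'I_m.+1 -> E) x (q : seq 'I_m.+1) : seq E :=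
  if q is y :: q' then g x y :: pe g y q' else [::].

Lemma cycle_extra (S T : {set E}) e :
  S \subset T -> uconnected s t S -> e \in T -> e \notin S -> has_cycle s t T.
Proof.
move=> ST cS eT eS.
pose g x y := odflt e [pick f in S | joins s t f x y].
have gP : forall x y, uadj s t S x y -> (g x y \in S) && joins s t (g x y) x y.
  move=> x y /existsP[f /andP[fS jf]]; rewrite /g.
  case: pickP => [f' /andP[-> ->] //|/(_ f)]; by rewrite fS jf.
have cuw : connect (uadj s t S) (s e) (t e) by move/forallP: cS => /(_ (s e)) /forallP.
case/connectP: cuw => p pp.
case: (shortenP pp) => q pq uq _ lastq {pp p}.
have peS : forall x q, path (uadj s t S) x q -> all (fun f => f \in S) (pe g x q).
  move=> x0 q0; elim: q0 x0 => //= y q0 IH x0 /andP[/gP/andP[-> _] /IH]; done.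
have pesz : forall x q, size (pe g x q) = size q.
  by move=> x0 q0; elim: q0 x0 => //= y q0 IH x0; rewrite IH.
have peJ : forall x q, path (uadj s t S) x q ->
   all (fun p => joins s t p.1 p.2.1 p.2.2) (zip (pe g x q) (zip (belast x q) q)).
  move=> x0 q0; elim: q0 x0 => //= y q0 IH x0 /andP[/gP/andP[_ ->] /IH]; done.
have peU : forall x q, path (uadj s t S) x q -> uniq (x :: q) ->
   uniq (pe g x q) /\ (forall f, f \in pe g x q -> (s f \in x :: q) && (t f \in x :: q)).
  move=> x0 q0; elim: q0 x0 => [|y q0 IH] x0 /=; first by [].
  move=> /andP[/gP/andP[_ jg] pq0] /andP[xn uyq].
  have [u1 u2] := IH y pq0 uyq.
  split.
    rewrite u1 andbT; apply/negP => /u2.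
    move: jg => /orP[]/andP[/eqP-> /eqP->] /andP[H1 H2];
      by rewrite ?H1 ?H2 in xn.
  move=> f; rewrite inE => /orP[/eqP->|/u2]; last first.
    by rewrite !inE => /andP[-> ->]; rewrite !orbT.
  by case/joins_ends/andP: jg; rewrite !inE => /orP[]/eqP-> /orP[]/eqP->;
    rewrite ?eqxx ?orbT.
have [upe _] := peU _ _ pq uq.
exists (rcons (pe g (s e) q) e), (s e :: q).
split; first split.
- by rewrite size_rcons.
- by rewrite size_rcons pesz.
- rewrite rcons_uniq upe andbT; apply/negP => /(allP (peS _ _ pq)); by rewrite (negbTE eS).
- exact: uq.
split.
  move=> f; rewrite mem_rcons inE => /orP[/eqP->//|fpe].
  by apply: (subsetP ST); exact: (allP (peS _ _ pq)).
rewrite rot1_cons [s e :: q]lastI zip_rcons ?size_belast //.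
rewrite zip_rcons; last by rewrite size_zip size_belast minnn pesz.
rewrite all_rcons peJ // andbT /= -lastq /joins !eqxx orbT.
done.
Qed.

Lemma map_traject (f : 'I_m.+1 -> 'I_m.+1) x n :
  map f (traject f x n) = traject f (f x) n.
Proof. by elim: n x => //= n IH x; rewrite IH. Qed.

Lemma zip_all3 (P : E -> 'I_m.+1 -> 'I_m.+1 -> bool) (F : 'I_m.+1 -> E) G l :
  all (fun z => P (F z) z (G z)) l ->
  all (fun p => P p.1 p.2.1 p.2.2) (zip (map F l) (zip l (map G l))).
Proof. by elim: l => //= z l IH /andP[-> /IH]. Qed.

Lemma cycle_notgood (T : {set E}) phi :
  srcok phi -> (forall j, phi j \in T) -> ~ good phi -> has_cycle s t T.
Proof.
move=> ok inT ng.
have [j nr] : exists j, ~ reach phi (lift r j).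
  by apply: NNPP => H; apply: ng => j; apply: NNPP => H'; apply: H; exists j.
set G := Gf phi.
have nrk : forall k, iter k G (lift r j) != r.
  by move=> k; apply/eqP => H; apply: nr; exists k.
set x0 := lift r j.
set o := fingraph.order G x0.
have /trajectP[i io Hi] := fingraph.looping_order G x0.
set y := iter i G x0.
set p := o - i.
have p0 : 0 < p by rewrite subn_gt0.
have oip : o = i + p by rewrite subnKC // ltnW.
have uvs : uniq (traject G y p).
  by have := fingraph.orbit_uniq G x0; rewrite /fingraph.orbit -/o oip trajectD cat_uniq => /and3P[].
have iy : iter p G y = y by rewrite /y -iterD addnC -oip.
have vsr : forall z, z \in traject G y p -> z != r.
  by move=> z /trajectP[k _ ->]; rewrite /y -iterD.
have rotv : rot 1 (traject G y p) = map G (traject G y p).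
  case: p p0 iy {uvs vsr oip} => // p' _ iy.
  by rewrite [in LHS]trajectS rot1_cons map_traject trajectSr -iterSr iy.
pose F z := oapp phi (phi j) (unlift r z).
have FP : forall z, z != r -> (s (F z) == z) && (t (F z) == G z).
  move=> z; have [k ->|->] := unliftP r z; last by rewrite eqxx.
  by rewrite /F liftK /= ok /G Gf_lift !eqxx.
exists (map F (traject G y p)), (traject G y p).
split; first split.
- by rewrite size_map size_traject.
- by rewrite size_map.
- rewrite map_inj_in_uniq // => z1 z2 H1 H2 Fz.
  have /andP[/eqP <- _] := FP _ (vsr _ H1).
  by have /andP[/eqP <- _] := FP _ (vsr _ H2); rewrite Fz.
- exact: uvs.
split.
  move=> f /mapP[z _ ->]; rewrite /F.
  by case: (unlift r z) => [k|] /=; apply: inT.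
rewrite rotv; apply: zip_all3; apply/allP => z zin.
by have /andP[/eqP H1 /eqP H2] := FP _ (vsr _ zin); rewrite /joins H1 H2 !eqxx.
Qed.

Lemma tree_phi (T : {set E}) :
  spanning_tree_rooted s t T r ->
  exists phi, [/\ srcok phi, good phi & imf phi = T].
Proof.
case=> cT aT rT.
have ex : forall j, exists f, (f \in T) && (s f == lift r j).
  move=> j; move/forallP: rT => /(_ (lift r j)).
  rewrite [lift r j == r]eq_sym (negbTE (neq_lift r j)).
  case: forall_inP => // H _.
  by apply: NNPP => H'; apply: H => f fT; apply/negP => /eqP sf; apply: H'; exists f; rewrite fT sf eqxx.
have [g gP] := fin_all_exists ex.
pose phi := [ffun j => g j].
have ok : srcok phi by move=> j; rewrite ffunE; case/andP: (gP j) => _ /eqP.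
have inT : forall j, phi j \in T by move=> j; rewrite ffunE; case/andP: (gP j).
have gd : good phi.
  by apply: NNPP => ng; apply: aT; exact: (cycle_notgood ok inT ng).
exists phi; split => //.
have sub : imf phi \subset T by apply/subsetP => f /imsetP[k _ ->].
apply/eqP; rewrite eqEsubset sub /=; apply/subsetP => f fT.
apply: NNPP => /negP nf; apply: aT.
exact: (cycle_extra sub (conn_good ok gd) fT nf).
Qed.

Lemma imf_inj phi psi : srcok phi -> srcok psi -> imf phi = imf psi -> phi = psi.
Proof.
move=> ok1 ok2 eqi; apply/ffunP => j.
have : phi j \in imf psi by rewrite -eqi; apply/imsetP; exists j.
case/imsetP => k _ Hk.
have := congr1 s Hk; rewrite ok1 ok2 => /lift_inj jk.
by rewrite Hk jk.
Qed.

Lemma tree_good phi : srcok phi -> good phi -> spanning_tree_rooted s t (imf phi) r.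
Proof.
move=> ok gd; split; [exact: conn_good | exact: acyclic_good | exact: rooted_good].
Qed.

Local Open Scope ring_scope.
Lemma sum_trees (R : comPzRingType) (pi : E -> R) :
  \sum_(phi : {ffun 'I_m -> E} | classicb (srcok phi /\ good phi)) \prod_j pi (phi j)
  = Upsilon s t pi r.
Proof.
pose A := [pred phi : {ffun 'I_m -> E} | classicb (srcok phi /\ good phi)].
have e1 : forall phi, srcok phi -> \prod_j pi (phi j) = \prod_(e in imf phi) pi e.
  move=> phi ok; rewrite /imf big_imset /=; last by move=> x y _ _; apply: srcok_inj.
  by apply: eq_bigl => x; rewrite inE.
rewrite (eq_bigr (fun phi => \prod_(e in imf phi) pi e)); last first.
  by move=> phi /classicbP[ok _]; apply: e1.
rewrite -(big_imset (fun T => \prod_(e in T) pi e) (h := imf) (A := A)); last first.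
  by move=> x y /classicbP[ok1 _] /classicbP[ok2 _]; apply: imf_inj.
rewrite /Upsilon; apply: eq_bigl => T.
apply/imsetP/idP => [[phi /classicbP[ok gd] ->]|/classicbP tr].
  by apply/classicbP; apply: tree_good.
have [phi [ok gd <-]] := tree_phi tr.
by exists phi => //; apply/classicbP.
Qed.

Variables (R : comPzRingType) (pi : E -> R).

Definition Cmx (phi : {ffun 'I_m -> E}) : 'M[R]_m :=
  \matrix_(i, k) ((k == i)%:R - (t (phi i) == lift r k)%:R).

Lemma detC_good phi : srcok phi -> good phi -> \det (Cmx phi) = 1.
Proof.
move=> ok gd.
rewrite /determinant (bigD1 (1%g : {perm 'I_m})) //=.
rewrite [X in _ + X]big1 ?addr0; last first.
move=> sg sg1.
have [i0 i0m] : exists i0, sg i0 != i0.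
  apply: NNPP => H; move/eqP: sg1 => sg1; apply: sg1; apply/permP => i; rewrite perm1.
  by apply/eqP; apply: NNPP => H'; apply: H; exists i; apply/negP.
case: (boolP [exists i, Cmx phi i (sg i) == 0]) => [/existsP[i /eqP Hi]|/existsPn H].
  by rewrite (bigD1 i) //= Hi mul0r mulr0.
have step : forall i, sg i != i -> t (phi i) = lift r (sg i).
  move=> i Hi; have := H i; rewrite !mxE (negbTE Hi) sub0r oppr_eq0.
  by case: (t (phi i) =P lift r (sg i)) => // _; rewrite eqxx.
exfalso.
have [k Hk] := gd i0.
have : exists i, (sg i != i) && (iter k (Gf phi) (lift r i0) == lift r i).
  elim: k {Hk} => [|k [i /andP[Hi /eqP IH]]]; first by exists i0; rewrite i0m eqxx.
  exists (sg i); rewrite iterS IH Gf_lift step // eqxx andbT.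
  by apply: contra Hi => /eqP/perm_inj ->.
by case=> i /andP[_]; rewrite Hk (negbTE (neq_lift r i)).
rewrite odd_perm1 expr0 mul1r big1 // => i _.
rewrite !mxE perm1 eqxx.
have -> : (t (phi i) == lift r i) = false.
  by apply/negbTE; rewrite -ok eq_sym noloop.
by rewrite subr0.
Qed.

Definition Wv phi (x : 'I_m.+1) : R := (classicb (~ reach phi x))%:R.

Lemma detC_bad phi : srcok phi -> ~ good phi -> \det (Cmx phi) = 0.
Proof.
move=> ok ng.
pose w : 'cV[R]_m := \col_k Wv phi (lift r k).
have Cw : Cmx phi *m w = 0.
  apply/matrixP => i z; rewrite !mxE.
  under eq_bigr do rewrite !mxE mulrBl.
  rewrite big_split /= sumrN (bigD1 i) //= eqxx mul1r big1 ?addr0; last first.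
    by move=> k /negbTE; rewrite eq_sym => ->; rewrite mul0r.
  have -> : \sum_k (t (phi i) == lift r k)%:R * Wv phi (lift r k) = Wv phi (t (phi i)).
    have [k0 ->|->] := unliftP r (t (phi i)).
      rewrite (bigD1 k0) //= eqxx mul1r big1 ?addr0 // => k /negbTE.
      by rewrite (inj_eq lift_inj) eq_sym => ->; rewrite mul0r.
    rewrite big1; last by move=> k _; rewrite (negbTE (neq_lift r k)) mul0r.
    rewrite /Wv; have -> : classicb (~ reach phi r) = false.
      by apply/negbTE/negP => /classicbP; apply; exists 0.
    by [].
  rewrite /Wv -Gf_lift.
  have E1 := reachG phi (lift r i).
  have -> : classicb (~ reach phi (Gf phi (lift r i))) = classicb (~ reach phi (lift r i)).
    rewrite /classicb; case: excluded_middle_informative => H1;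
      case: excluded_middle_informative => H2 //; exfalso; move: E1 H1 H2; clear; tauto.
  by rewrite subrr.
have [j nj] : exists j, ~ reach phi (lift r j).
  by apply: NNPP => H; apply: ng => j; apply: NNPP => H'; apply: H; exists j.
have : (\adj (Cmx phi) *m Cmx phi) *m w = 0 by rewrite -mulmxA Cw mulmx0.
rewrite mul_adj_mx mul_scalar_mx => /matrixP /(_ j 0).
rewrite !mxE /Wv.
have -> : classicb (~ reach phi (lift r j)) = true by apply/classicbP.
by rewrite mulr1.
Qed.

Lemma negM i j :
  - (row' r (col' r (laplacian s t pi))) i j =
  \sum_(e | s e == lift r j) pi e * ((i == j)%:R - (t e == lift r i)%:R).
Proof.
rewrite !mxE (inj_eq lift_inj).
case: eqP => [<-|/eqP nij].
- rewrite opprK /lap_offdiag.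
  rewrite [RHS](partition_big t (fun k => k != lift r i)); last first.
    by move=> e /eqP <-; rewrite eq_sym noloop.
  apply: eq_bigr => k kn; apply: eq_bigr => e /andP[_ /eqP ->].
  by rewrite (negbTE kn) subr0 mulr1.
- rewrite /lap_offdiag big_mkcondr -sumrN; apply: eq_bigr => e _.
  by case: eqP => _; rewrite sub0r ?mulrN1 ?oppr0 ?mulr0.
Qed.

Theorem matrix_tree :
  \det (row' r (col' r (laplacian s t pi))) = (-1) ^+ m * Upsilon s t pi r.
Proof.
pose M : 'M[R]_m := row' r (col' r (laplacian s t pi)).
change (\det M = (-1) ^+ m * Upsilon s t pi r).
have dN : \det (- M) = (-1) ^+ m * \det M by rewrite -scaleN1r detZ.
have -> : \det M = (-1) ^+ m * \det (- M).
  by rewrite dN mulrA -exprMn mulrNN mulr1 expr1n mul1r.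
congr (_ * _).
rewrite -det_tr /determinant.
pose c (i k : 'I_m) e := ((k == i)%:R - (t e == lift r k)%:R : R).
have stepA : forall sg : {perm 'I_m}, \prod_i (- M)^T i (sg i) =
   \sum_(phi : {ffun 'I_m -> E}) \prod_i
      (if s (phi i) == lift r i then pi (phi i) * c i (sg i) (phi i) else 0).
  move=> sg; rewrite -(bigA_distr_bigA (fun i e => if s e == lift r i then pi e * c i (sg i) e else 0)).
  apply: eq_bigr => i _.
  by rewrite mxE mxE /M negM big_mkcond.
under eq_bigr => sg _.
  rewrite stepA big_distrr.
  over.
rewrite exchange_big /=.
rewrite -(sum_trees pi) [RHS]big_mkcond; apply: eq_bigr => phi _.
case: (boolP [forall i, s (phi i) == lift r i]) => [/forallP okb|/forallPn[i ni]].
  have ok : srcok phi by move=> i; apply/eqP.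
  under eq_bigr => sg _.
    rewrite (eq_bigr (fun i => pi (phi i) * Cmx phi i (sg i))); last first.
      by move=> i _; rewrite okb mxE.
    rewrite big_split /= mulrCA.
  over.
  rewrite -big_distrr /= -/(determinant _).
  case: (classic (good phi)) => gd.
    rewrite detC_good // mulr1.
    by have -> : classicb (srcok phi /\ good phi) = true by apply/classicbP.
  rewrite detC_bad // mulr0.
  have -> // : classicb (srcok phi /\ good phi) = false.
  by apply/negbTE/negP => /classicbP[].
have -> : classicb (srcok phi /\ good phi) = false.
  by apply/negbTE/negP => /classicbP[ok _]; rewrite ok eqxx in ni.
rewrite big1 // => sg _.
by rewrite (bigD1 i) //= (negbTE ni) mul0r mulr0.
Qed.

End Comb.

Local Open Scope ring_scope.

Lemma cof_const (R : comPzRingType) n (L : 'M[R]_n) :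
  (forall k, \sum_i L i k = 0) -> forall j j' k, cofactor L j k = cofactor L j' k.
Proof.
move=> colsum j j' k.
have [<-//|njj] := eqVneq j j'.
have njj' : j' != j by rewrite eq_sym.
pose Z j0 : 'M[R]_n := \matrix_(a, b) if a == j0 then (b == k)%:R else L a b.
have cofZ : forall j0, \det (Z j0) = cofactor L j0 k.
  move=> j0; rewrite (expand_det_row _ j0) (bigD1 k) //= big1 ?addr0.
    rewrite mxE !eqxx mul1r /cofactor; congr (_ * \det _).
    by apply/matrixP => a b; rewrite !mxE eq_sym (negbTE (neq_lift j0 a)).
  by move=> b nb; rewrite mxE eqxx (negbTE nb) mul0r.
rewrite -!cofZ.
pose Y i : 'M[R]_n := \matrix_(a, b) if a == j' then L i b else Z j a b.
have cofY : forall i b, cofactor (Y i) j' b = cofactor (Z j) j' b.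
  move=> i b; rewrite /cofactor; congr (_ * \det _).
  by apply/matrixP => a c; rewrite !mxE eq_sym (negbTE (neq_lift j' a)).
have detY : forall i, \det (Y i) = \sum_b L i b * cofactor (Z j) j' b.
  move=> i; rewrite (expand_det_row _ j'); apply: eq_bigr => b _.
  by rewrite cofY mxE eqxx.
have claim1 : \det (Z j) = - \det (Y j).
  rewrite (expand_det_row _ j').
  have -> : \sum_b Z j j' b * cofactor (Z j) j' b =
            - \sum_(i | i != j') \det (Y i).
    rewrite (eq_bigr _ (fun i _ => detY i)).
    rewrite exchange_big -sumrN; apply: eq_bigr => b _.
    rewrite mxE eq_sym (negbTE njj) -mulr_suml -mulNr; congr (_ * _).
    have := colsum b; rewrite (bigD1 j') //= => /eqP; rewrite addr_eq0 => /eqP.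
    done.
  congr (- _); rewrite (bigD1 j) /=; last by rewrite njj.
  rewrite big1 ?addr0 // => i /andP[nij' nij].
  apply: (determinant_alternate nij') => b.
  by rewrite !mxE eqxx (negbTE nij') (negbTE nij).
have claim2 : Y j = xrow j j' (Z j').
  apply/matrixP => a b; rewrite !mxE.
  case: (tpermP j j' a) => [->|->|/eqP na1 /eqP na2].
  - by rewrite !eqxx (negbTE njj).
  - by rewrite (negbTE njj') !eqxx (negbTE njj).
  - by rewrite (negbTE na2) (negbTE na1).
rewrite claim1 claim2 xrowE det_mulmx /tperm_mx det_perm odd_tperm njj.
by rewrite expr1 mulN1r opprK.
Qed.

Section Lap.
Variables (m : nat) (E : finType) (s t : E -> 'I_m.+1).
Hypothesis noloop : forall e, s e != t e.
Variables (R : comPzRingType) (pi : E -> R).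

Lemma lap_colsum k : \sum_i laplacian s t pi i k = 0.
Proof.
rewrite (bigD1 k) //= mxE eqxx.
apply/eqP; rewrite addrC addr_eq0 opprK; apply/eqP.
apply: eq_bigr => i nik.
by rewrite mxE (negbTE nik).
Qed.

Lemma lap_det0 : \det (laplacian s t pi) = 0.
Proof.
set L := laplacian s t pi.
pose u : 'rV[R]_m.+1 := const_mx 1.
have uL : u *m L = 0.
  apply/matrixP => a k; rewrite mxE [RHS]mxE -[RHS](lap_colsum k).
  apply: eq_bigr => i _.
  by rewrite [u _ _]mxE mul1r.
have : (u *m L) *m \adj L = 0 by rewrite uL mul0mx.
rewrite -mulmxA mul_mx_adj mul_mx_scalar => /matrixP /(_ 0 0).
by rewrite !mxE mulr1.
Qed.

Lemma lap_ker i : \sum_k laplacian s t pi i k * Upsilon s t pi k = 0.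
Proof.
set L := laplacian s t pi.
have := mul_mx_adj L; rewrite lap_det0 => /matrixP /(_ i i).
rewrite mxE [RHS]mxE mul0rn.
under eq_bigr => k _.
  rewrite [\adj L k i]mxE (cof_const (@lap_colsum) i k k) /cofactor.
  rewrite -signr_odd addnn odd_double expr0 mul1r matrix_tree //.
  rewrite mulrCA.
over.
rewrite -big_distrr /= => H.
have := congr1 (fun x => (-1) ^+ m * x) H.
by rewrite /= mulrA -exprMn mulrNN mulr1 expr1n mul1r mulr0.
Qed.

End Lap.

Unset Implicit Arguments.
Set Strict Implicit.
Set Printing Implicit Defensive.

Theorem proposition2p2 (R : comPzRingType) (m : nat) (hm : (1 <= m)%N)
  (A : 'M[R]_m) (b : 'cV[R]_m)
  (E : finType) (s t : E -> 'I_m.+1) (pi : E -> R)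
  (noloop : forall e, s e != t e)
  (hL : laplacian s t pi = Lmat A b) :
  \det A = (-1) ^+ m * Upsilon s t pi ord_max /\
  (\det A != 0 ->
   forall (S : comUnitRingType) (f : {rmorphism R -> S}),
     injective f ->
     f (Upsilon s t pi ord_max) \is a GRing.unit ->
     let x : 'cV[S]_m :=
       \col_i (f (Upsilon s t pi (lift ord_max i)) / f (Upsilon s t pi ord_max)) in
     map_mx f A *m x + map_mx f b = 0 /\
     (forall y : 'cV[S]_m, map_mx f A *m y + map_mx f b = 0 -> y = x)).
Proof.
have eA : A = row' ord_max (col' ord_max (laplacian s t pi)) :> 'M_m.
  by apply/matrixP => i j; rewrite hL !mxE !liftK.
have detA : \det A = (-1) ^+ m * Upsilon s t pi ord_max.
  by rewrite eA; exact: matrix_tree.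
split => // nz S f finj unitU x.
have wl : forall j : 'I_m, widen_ord (leqnSn m) j = lift ord_max j.
  by move=> j; apply: val_inj; rewrite /=; symmetry; exact: lift_max.
have ker : forall i : 'I_m,
    \sum_j A i j * Upsilon s t pi (lift ord_max j) + b i 0 * Upsilon s t pi ord_max = 0.
  move=> i; have := lap_ker noloop pi (lift ord_max i).
  rewrite big_ord_recr /=.
  under eq_bigr => j _ do rewrite wl hL mxE !liftK.
  by rewrite hL mxE liftK unlift_none.
set U := f (Upsilon s t pi ord_max).
have fker : forall i : 'I_m,
    \sum_j f (A i j) * f (Upsilon s t pi (lift ord_max j)) + f (b i 0) * U = 0.
  move=> i; have := congr1 f (ker i); rewrite rmorph0 rmorphD rmorph_sum /= rmorphM.
  by under eq_bigr do rewrite rmorphM.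
have sol : map_mx f A *m x + map_mx f b = 0.
  apply/matrixP => i z; rewrite ord1 !mxE.
  under eq_bigr do rewrite !mxE mulrA.
  rewrite -mulr_suml.
  have := fker i; rewrite addrC => /eqP; rewrite addr_eq0 => /eqP ->.
  by rewrite mulNr mulrK // subrr.
split => // y Hy.
have unitA : map_mx f A \in unitmx.
  by rewrite unitmxE det_map_mx detA rmorphM rmorph_sign unitrMl // unitrX // unitrN1.
have : map_mx f A *m (y - x) = 0.
  have e1 : map_mx f A *m y = - map_mx f b by apply/eqP; rewrite -addr_eq0 Hy.
  have e2 : map_mx f A *m x = - map_mx f b by apply/eqP; rewrite -addr_eq0 sol.
  by rewrite mulmxBr e1 e2 subrr.
move=> H; apply/eqP; rewrite -subr_eq0; apply/eqP.
by rewrite -(mulKmx unitA (y - x)) H mulmx0.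
Qed.
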